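(* Let $0<t_1\le t_2\le\cdots$ be real numbers with $c=\sum_{n=1}^{\infty}t_n^{-2}<\infty$, let $g(t)=\prod_{n=1}^{\infty}\left(1-\frac{t^{2}}{t_n^{2}}\right)$, and let $0\le\beta<1$. Then for every $p>0$, \[ \int_{0}^{\infty}\frac{|g(t)|^{p}}{t^{\beta}}\,dt\;\ge\;\frac{1}{2c^{(1-\beta)/2}}\,\frac{\Gamma(p+1)\,\Gamma\!\left(\frac{1-\beta}{2}\right)}{\Gamma\!\left(\frac{1-\beta}{2}+p+1\right)} \] (the left side possibly being $+\infty$), and consequently \[ \liminf_{p\to\infty}p^{\frac{1-\beta}{2}}\int_{0}^{\infty}\frac{|g(t)|^{p}}{t^{\beta}}\,dt\;\ge\;\frac{\Gamma\!\left(\frac{1-\beta}{2}\right)}{2c^{(1-\beta)/2}}. \]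
   Context: $\Gamma$ denotes the gamma function. *)

(* Defs.v *)
From Stdlib Require Import Reals Lra ClassicalEpsilon.
Open Scope R_scope.

(* x^p for real p > 0 and x >= 0, with the convention 0^p = 0
   (Stdlib's Rpower 0 p would give exp (p * ln 0) = 1). *)
Definition rpow (x p : R) : R :=
  match Rlt_dec 0 x with left _ => Rpower x p | right _ => 0 end.

(* Partial products  prod_{n=0}^{N} (1 - x^2 / s_n^2)  (s_0 plays t_1). *)
Fixpoint partial_prod (s : nat -> R) (x : R) (N : nat) : R :=
  match N with
  | O => 1 - x ^ 2 / (s O) ^ 2
  | S M => partial_prod s x M * (1 - x ^ 2 / (s (S M)) ^ 2)
  end.

Definition compact_ints (f : R -> R) (y : R) : Prop :=
  exists (a b : R) (pr : Riemann_integrable f a b),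
    0 < a <= b /\ y = RiemannInt pr.

(* For a nonnegative f, locally Riemann integrable on (0,oo), the (Lebesgue /
   improper) integral over (0,oo) is the supremum of its integrals over
   compact subintervals.  [has_int0inf f l] : this integral is finite = l. *)
Definition has_int0inf (f : R -> R) (l : R) : Prop :=
  (forall a b, 0 < a <= b -> inhabited (Riemann_integrable f a b)) /\
  is_lub (compact_ints f) l.

(* "int_0^oo f > M" (the integral possibly being +oo): some compact
   subinterval integral already exceeds M. *)
Definition int0inf_gt (f : R -> R) (M : R) : Prop :=
  exists y, compact_ints f y /\ M < y.

Definition Gamma (s : R) : R :=
  epsilon (inhabits 0)
    (fun l => has_int0inf (fun x => Rpower x (s - 1) * exp (- x)) l).

(* Main.v *)
Require Import Defs.
From Stdlib Require Import Reals ClassicalEpsilon Lra Lia Classical.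
From Coquelicot Require Import Coquelicot.
Open Scope R_scope.

Lemma ballR (x e y : R) : @ball R_UniformSpace x e y <-> Rabs (y - x) < e.
Proof. unfold ball; simpl; unfold AbsRing_ball, abs, minus, plus, opp; simpl. tauto. Qed.

Lemma ballR_lt (x e y : R) : @ball R_UniformSpace x e y -> x - e < y < x + e.
Proof. intros H. change (Rabs (y - x) < e) in H. apply Rabs_def2 in H. lra. Qed.

Ltac cleanR H :=
  repeat match type of H with
  | context [@Hierarchy.minus ?G ?x ?y] => change (@Hierarchy.minus G x y) with (x - y) in H
  end.

Definition GoodDom (D : R -> Prop) (Fa Fb : (R -> Prop) -> Prop) : Prop :=
  (forall a b x, D a -> D b -> a <= x <= b -> D x) /\
  (forall a0, D a0 -> Fa (fun a => D a /\ a <= a0)) /\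
  (forall b0, D b0 -> Fb (fun b => D b /\ b0 <= b)) /\
  (exists d, D d).

Lemma gd_prod D Fa Fb : GoodDom D Fa Fb ->
  filter_prod Fa Fb (fun ab => D (fst ab) /\ D (snd ab) /\ fst ab <= snd ab).
Proof.
  intros [HD [HA [HB [d Hd]]]].
  apply Filter_prod with (fun a => D a /\ a <= d) (fun b => D b /\ d <= b); auto.
  intros x y [? ?] [? ?]; simpl; repeat split; auto; lra.
Qed.

Lemma gd_in D Fa Fb a b x : GoodDom D Fa Fb -> D a -> D b ->
  Rmin a b <= x <= Rmax a b -> D x.
Proof.
  intros [HD _] Ha Hb Hx.
  unfold Rmin, Rmax in Hx; destruct (Rle_dec a b).
  - apply (HD a b x Ha Hb Hx).
  - apply (HD b a x Hb Ha); lra.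
Qed.

Lemma gd_ex D Fa Fb f a b : GoodDom D Fa Fb -> (forall x, D x -> continuous (f : R -> R) x) ->
  D a -> D b -> ex_RInt f a b.
Proof.
  intros G Hc Ha Hb. apply (ex_RInt_continuous (V:=R_CompleteNormedModule)). intros z Hz. apply Hc.
  eapply (gd_in D Fa Fb a b); eauto.
Qed.

Lemma gd_mono D Fa Fb f a b a' b' : GoodDom D Fa Fb -> (forall x, D x -> continuous (f : R -> R) x) ->
  (forall x, D x -> 0 <= f x) -> D a' -> D b' -> a' <= a -> a <= b -> b <= b' ->
  RInt f a b <= RInt f a' b'.
Proof.
  intros G Hc Hp Ha' Hb' h1 h2 h3.
  assert (HD := proj1 G).
  assert (Da: D a) by (apply (HD a' b'); auto; lra).
  assert (Db: D b) by (apply (HD a' b'); auto; lra).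
  rewrite <- (RInt_Chasles f a' a b') by (eapply gd_ex; eauto).
  rewrite <- (RInt_Chasles f a b b') by (eapply gd_ex; eauto).
  assert (0 <= RInt f a' a).
  { apply RInt_ge_0; auto. eapply gd_ex; eauto. intros x hx; apply Hp; apply (HD a' b'); auto; lra. }
  assert (0 <= RInt f b b').
  { apply RInt_ge_0; auto. eapply gd_ex; eauto. intros x hx; apply Hp; apply (HD a' b'); auto; lra. }
  simpl. unfold plus; simpl. lra.
Qed.

Lemma gd_le D Fa Fb {FA : ProperFilter Fa} {FB : ProperFilter Fb} (f : R -> R) l a b :
  GoodDom D Fa Fb -> (forall x, D x -> continuous f x) -> (forall x, D x -> 0 <= f x) ->
  is_RInt_gen f Fa Fb l -> D a -> D b -> a <= b -> RInt f a b <= l.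
Proof.
  intros G Hc Hp Hl Ha Hb hab.
  destruct (Rle_lt_dec (RInt f a b) l) as [h|h]; auto. exfalso.
  assert (he : 0 < RInt f a b - l) by lra.
  assert (Hl' := proj1 (filterlimi_locally _ _) Hl (mkposreal _ he)).
  assert (Hfp : filter_prod Fa Fb (fun ab => D (fst ab) /\ fst ab <= a /\ D (snd ab) /\ b <= snd ab)).
  { destruct G as [HD [HA [HB Hd]]].
    apply Filter_prod with (fun x => D x /\ x <= a) (fun x => D x /\ b <= x); auto.
    intros; simpl; tauto. }
  destruct (filter_ex _ (filter_and _ _ Hfp Hl')) as [[a' b'] [[h1 [h2 [h3 h4]]] [z [Hi Hz]]]].
  simpl in *. apply (is_RInt_unique (V:=R_CompleteNormedModule)) in Hi. subst z. apply ballR_lt in Hz. simpl in Hz.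
  assert (RInt f a b <= RInt f a' b') by (apply (gd_mono D Fa Fb f a b a' b'); auto).
  lra.
Qed.

Lemma gd_approx D Fa Fb {FA : ProperFilter Fa} {FB : ProperFilter Fb} (f : R -> R) l M :
  GoodDom D Fa Fb -> is_RInt_gen f Fa Fb l -> M < l ->
  exists a b, D a /\ D b /\ a <= b /\ M < RInt f a b.
Proof.
  intros G Hl hM.
  assert (he : 0 < l - M) by lra.
  assert (Hl' := proj1 (filterlimi_locally _ _) Hl (mkposreal _ he)).
  destruct (filter_ex _ (filter_and _ _ (gd_prod _ _ _ G) Hl')) as [[a b] [[h1 [h2 h3]] [z [Hi Hz]]]].
  simpl in *. apply (is_RInt_unique (V:=R_CompleteNormedModule)) in Hi. subst z. apply ballR_lt in Hz. simpl in Hz.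
  exists a, b; repeat split; auto; lra.
Qed.

Lemma gd_ub D Fa Fb {FA : ProperFilter Fa} {FB : ProperFilter Fb} (f : R -> R) l X :
  GoodDom D Fa Fb -> is_RInt_gen f Fa Fb l ->
  (forall a b, D a -> D b -> a <= b -> RInt f a b <= X) -> l <= X.
Proof.
  intros G Hl HX. destruct (Rle_lt_dec l X) as [h|h]; auto.
  destruct (gd_approx D Fa Fb f l X G Hl h) as [a [b [? [? [? ?]]]]].
  specialize (HX a b H H0 H1); lra.
Qed.

Lemma gd_exists D Fa Fb {FA : Filter Fa} {FB : Filter Fb} (f : R -> R) B :
  GoodDom D Fa Fb -> (forall x, D x -> continuous f x) -> (forall x, D x -> 0 <= f x) ->
  (forall a b, D a -> D b -> a <= b -> RInt f a b <= B) ->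
  exists l, is_RInt_gen f Fa Fb l.
Proof.
  intros G Hc Hp HB.
  set (E := fun y => exists a b, D a /\ D b /\ a <= b /\ y = RInt f a b).
  assert (bE: bound E) by (exists B; intros y [a [b [? [? [? ->]]]]]; auto).
  assert (nE: exists y, E y).
  { destruct G as [_ [_ [_ [d Hd]]]]. exists (RInt f d d), d, d; repeat split; auto; lra. }
  destruct (completeness E bE nE) as [l [Hub Hlub]].
  exists l. apply filterlimi_lim_ext_loc with (f := fun ab => RInt f (fst ab) (snd ab)).
  - eapply filter_imp; [|apply (gd_prod _ _ _ G)]. intros [a b] [? [? ?]]; simpl.
    apply (RInt_correct (V:=R_CompleteNormedModule)). eapply (gd_ex D Fa Fb); eauto.
  - apply filterlim_locally. intros e.
    assert (exists a0 b0, D a0 /\ D b0 /\ a0 <= b0 /\ l - e < RInt f a0 b0).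
    { apply NNPP; intro Hn. assert (l <= l - e).
      { apply Hlub. intros y [a [b [? [? [? ->]]]]]. apply Rnot_lt_le. intro. apply Hn; eauto 7. }
      destruct e; simpl in *; lra. }
    destruct H as [a0 [b0 [? [? [? ?]]]]].
    pose proof G as G'; destruct G' as [HD [HA [HB' Hd]]].
    apply Filter_prod with (fun x => D x /\ x <= a0) (fun x => D x /\ b0 <= x); auto.
    intros a b [? ?] [? ?]; simpl. apply ballR; simpl.
    assert (RInt f a0 b0 <= RInt f a b) by (apply (gd_mono D Fa Fb f a0 b0 a b G Hc Hp); auto; lra).
    assert (RInt f a b <= l) by (apply Hub; exists a, b; repeat split; auto; lra).
    apply Rabs_def1; destruct e; simpl in *; lra.
Qed.

Lemma gd_FTC D Fa Fb {FA : Filter Fa} {FB : Filter Fb} (F f : R -> R) (la lb : R) :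
  GoodDom D Fa Fb -> (forall x, D x -> is_derive F x (f x)) ->
  (forall x, D x -> continuous f x) ->
  filterlim F Fa (locally la) -> filterlim F Fb (locally lb) ->
  is_RInt_gen f Fa Fb (lb - la).
Proof.
  intros G Hd Hc Ha Hb.
  apply filterlimi_lim_ext_loc with (f := fun ab => F (snd ab) - F (fst ab)).
  - eapply filter_imp; [|apply (gd_prod _ _ _ G)]. intros [a b] [? [? ?]]; simpl.
    apply (is_RInt_derive (V:=R_CompleteNormedModule) F f a b).
    + intros y hy; apply Hd; eapply (gd_in D Fa Fb a b); eauto.
    + intros y hy; apply Hc; eapply (gd_in D Fa Fb a b); eauto.
  - apply filterlim_locally. intros e.
    assert (he : 0 < e / 2) by (destruct e; simpl; lra).
    assert (Ha' := proj1 (filterlim_locally _ _) Ha (mkposreal _ he)).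
    assert (Hb' := proj1 (filterlim_locally _ _) Hb (mkposreal _ he)).
    apply Filter_prod with (1 := Ha') (2 := Hb').
    intros a b h1 h2. apply ballR_lt in h1. apply ballR_lt in h2. simpl in *.
    change (Rabs ((F b - F a) - (lb - la)) < e). apply Rabs_def1; lra.
Qed.

Lemma exp_le (x y : R) : x <= y -> exp x <= exp y.
Proof. intros h. destruct (Rle_lt_or_eq_dec _ _ h) as [h'|h']; [left; apply exp_increasing; auto| subst; lra]. Qed.

Lemma ln_le_m1 (x : R) : 0 < x -> ln x <= x - 1.
Proof. intros h. assert (H := exp_ineq1_le (ln x)). rewrite exp_ln in H; lra. Qed.

Lemma Rpower_pos (x y : R) : 0 < Rpower x y.
Proof. apply exp_pos. Qed.

Lemma Rpower_0r (x : R) : Rpower x 0 = 1.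
Proof. unfold Rpower. rewrite Rmult_0_l. apply exp_0. Qed.

Lemma Rpower_sub1 (x y : R) : 0 < x -> Rpower x (y - 1) = Rpower x y / x.
Proof.
  intros h. unfold Rpower. replace ((y - 1) * ln x) with (y * ln x + - ln x) by ring.
  rewrite exp_plus, exp_Ropp, exp_ln; auto.
Qed.

Lemma Rpower_le1 (x y : R) : 0 < x <= 1 -> 0 <= y -> Rpower x y <= 1.
Proof.
  intros h hy. unfold Rpower. rewrite <- exp_0. apply exp_le.
  assert (ln x <= 0). { destruct (Req_dec x 1). subst; rewrite ln_1; lra. left; rewrite <- ln_1; apply ln_increasing; lra. }
  nra.
Qed.

Lemma is_derive_Rpower (x y : R) : 0 < x -> is_derive (fun t => Rpower t y) x (y * Rpower x (y - 1)).
Proof.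
  intros h. unfold Rpower. auto_derive; auto.
  replace ((y - 1) * ln x) with (y * ln x + - ln x) by ring.
  rewrite exp_plus, exp_Ropp, exp_ln; auto. field. lra.
Qed.

Lemma continuous_Rpower (x y : R) : 0 < x -> continuous (fun t => Rpower t y) x.
Proof. intros h. apply (ex_derive_continuous (K:=R_AbsRing) (V:=R_NormedModule)). eexists. apply is_derive_Rpower; auto. Qed.

Lemma Rpower_small (z : R) : 0 < z -> forall eps, 0 < eps -> exists d, 0 < d /\ forall v, 0 < v < d -> Rpower v z < eps.
Proof.
  intros hz eps he. exists (Rpower eps (/ z)). split. apply Rpower_pos.
  intros v hv. replace eps with (Rpower (Rpower eps (/ z)) z).
  apply Rlt_Rpower_l; auto; lra.
  rewrite Rpower_mult. replace (/ z * z) with 1 by (field; lra). apply Rpower_1; auto.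
Qed.

Definition Dpos (x : R) : Prop := 0 < x.
Definition D01 (x : R) : Prop := 0 < x < 1.

Lemma gd_pos : GoodDom Dpos (at_right 0) (Rbar_locally p_infty).
Proof.
  unfold Dpos; split; [|split; [|split]].
  - intros; lra.
  - intros a0 h. exists (mkposreal a0 h). intros y Hy Hy0. apply ballR_lt in Hy. simpl in *. lra.
  - intros b0 h. exists b0. intros; lra.
  - exists 1; lra.
Qed.

Lemma gd_01 : GoodDom D01 (at_right 0) (at_left 1).
Proof.
  unfold D01; split; [|split; [|split]].
  - intros; lra.
  - intros a0 h. exists (mkposreal a0 (proj1 h)). intros y Hy Hy0. apply ballR_lt in Hy. simpl in *. lra.
  - intros b0 h. assert (h1 : 0 < 1 - b0) by lra. exists (mkposreal _ h1). intros y Hy Hy0. apply ballR_lt in Hy. simpl in *. lra.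
  - exists (1/2); lra.
Qed.

Definition gam (z x : R) : R := Rpower x (z - 1) * exp (- x).

Lemma gam_cont z x : Dpos x -> continuous (gam z) x.
Proof.
  unfold Dpos, gam; intros h. apply (ex_derive_continuous (K:=R_AbsRing) (V:=R_NormedModule)).
  unfold Rpower. auto_derive. auto.
Qed.

Lemma gam_pos z x : Dpos x -> 0 <= gam z x.
Proof. intros _. unfold gam. apply Rmult_le_pos; left; [apply Rpower_pos|apply exp_pos]. Qed.

Lemma gam_bound z : 0 < z -> forall a b, Dpos a -> Dpos b -> a <= b ->
  RInt (gam z) a b <= exp ((z+1) * ln (z+1) - z) / z.
Proof.
  intros hz a b ha hb hab. unfold Dpos in *.
  set (C := exp ((z+1) * ln (z+1) - z)).
  set (H := fun t => C * (exp (z * (ln t - ln (1+t))) / z)).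
  set (h := fun t => C * (exp (z * (ln t - ln (1+t))) / (t * (1+t)))).
  assert (Hd : forall t, 0 < t -> is_derive H t (h t)).
  { intros t ht. unfold H, h. auto_derive. lra. unfold Rminus. field. lra. }
  assert (Hc : forall t, 0 < t -> continuous h t).
  { intros t ht. apply (ex_derive_continuous (K:=R_AbsRing) (V:=R_NormedModule)).
    unfold h. auto_derive. repeat split; try lra. nra. }
  assert (Hi : is_RInt h a b (H b - H a)).
  { apply (is_RInt_derive (V:=R_CompleteNormedModule) H h a b).
    - intros t ht. apply Hd. unfold Rmin in ht; destruct (Rle_dec a b); lra.
    - intros t ht. apply Hc. unfold Rmin in ht; destruct (Rle_dec a b); lra. }
  assert (Hle : forall t, a < t < b -> gam z t <= h t).
  { intros t ht. assert (t0 : 0 < t) by lra.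
    assert (E1 : h t = exp (((z+1) * ln (z+1) - z) + z * (ln t - ln (1+t)) - ln t - ln (1+t))).
    { unfold h, C. unfold Rminus. rewrite !exp_plus, !exp_Ropp, !exp_ln by lra. field. repeat split; try lra. apply Rgt_not_eq, exp_pos. }
    assert (E2 : gam z t = exp ((z - 1) * ln t - t)).
    { unfold gam, Rpower. rewrite <- exp_plus. f_equal. }
    rewrite E1, E2. apply exp_le.
    assert (L : ln (1+t) - ln (z+1) <= (1+t)/(z+1) - 1).
    { rewrite <- ln_div by lra. apply ln_le_m1. apply Rdiv_lt_0_compat; lra. }
    assert (L2 : (z+1) * (ln (1+t) - ln (z+1)) <= (z+1) * ((1+t)/(z+1) - 1)).
    { apply Rmult_le_compat_l; lra. }
    replace ((z+1) * ((1+t)/(z+1) - 1)) with (t - z) in L2 by (field; lra).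
    nra. }
  assert (R1 : RInt (gam z) a b <= RInt h a b).
  { apply RInt_le; auto.
    - apply (ex_RInt_continuous (V:=R_CompleteNormedModule)). intros t ht. apply gam_cont.
      unfold Dpos, Rmin in *; destruct (Rle_dec a b); lra.
    - eexists; exact Hi. }
  rewrite (is_RInt_unique _ _ _ _ Hi) in R1.
  assert (H b <= C / z).
  { unfold H. unfold Rdiv. rewrite <- Rmult_assoc. apply Rmult_le_compat_r. left; apply Rinv_0_lt_compat; auto.
    rewrite <- (Rmult_1_r C) at 2. apply Rmult_le_compat_l. left; apply exp_pos.
    assert (ln b < ln (1+b)) by (apply ln_increasing; lra).
    apply Rle_trans with (exp 0); [apply exp_le; nra| rewrite exp_0; lra]. }
  assert (0 <= H a).
  { unfold H. apply Rmult_le_pos. left; apply exp_pos. apply Rmult_le_pos. left; apply exp_pos.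
    left; apply Rinv_0_lt_compat; auto. }
  change (RInt (gam z) a b <= H b - H a) in R1. unfold C in *. lra.
Qed.

Lemma hasint_of_gen (f : R -> R) l : (forall x, Dpos x -> continuous f x) -> (forall x, Dpos x -> 0 <= f x) ->
  is_RInt_gen f (at_right 0) (Rbar_locally p_infty) l -> has_int0inf f l.
Proof.
  intros Hc Hp Hl. split.
  - intros a b h. constructor. apply ex_RInt_Reals_0. eapply (gd_ex Dpos); [apply gd_pos|auto|red;lra|red;lra].
  - split.
    + intros y [a [b [pr [h ->]]]]. rewrite <- RInt_Reals.
      apply (gd_le Dpos _ _ f l a b gd_pos Hc Hp Hl); red; lra.
    + intros u Hu. apply Rnot_lt_le; intro hl.
      destruct (gd_approx Dpos _ _ f l u gd_pos Hl hl) as [a [b [h1 [h2 [h3 h4]]]]].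
      assert (pr : Riemann_integrable f a b) by (apply ex_RInt_Reals_0; eapply (gd_ex Dpos); [apply gd_pos|auto|auto|auto]).
      assert (compact_ints f (RInt f a b)).
      { exists a, b, pr. unfold Dpos in *. split; [lra|apply RInt_Reals]. }
      specialize (Hu _ H). lra.
Qed.

Lemma Gamma_spec z : 0 < z -> is_RInt_gen (gam z) (at_right 0) (Rbar_locally p_infty) (Gamma z).
Proof.
  intros hz.
  destruct (gd_exists Dpos _ _ (gam z) _ gd_pos (gam_cont z) (gam_pos z) (gam_bound z hz)) as [l Hl].
  assert (H : has_int0inf (gam z) l) by (apply hasint_of_gen; auto; [apply gam_cont|apply gam_pos]).
  assert (Hg : has_int0inf (gam z) (Gamma z)).
  { unfold Gamma, gam. apply epsilon_spec.
    exists l; exact H. }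
  rewrite (is_lub_u _ _ _ (proj2 Hg) (proj2 H)). exact Hl.
Qed.

Lemma Gamma_le z a b : 0 < z -> 0 < a -> a <= b -> RInt (gam z) a b <= Gamma z.
Proof.
  intros hz ha hab. apply (gd_le Dpos _ _ (gam z) (Gamma z) a b gd_pos (gam_cont z) (gam_pos z) (Gamma_spec z hz)); red; lra.
Qed.

Lemma Gamma_nonneg z : 0 < z -> 0 <= Gamma z.
Proof.
  intros hz. assert (H := Gamma_le z 1 1 hz Rlt_0_1 (Rle_refl _)). rewrite RInt_point in H. exact H.
Qed.

Definition fK (z m u : R) : R := Rpower u (z - 1) * Rpower (1 - u) (m - 1).

Lemma fK_cont z m x : D01 x -> continuous (fK z m) x.
Proof.
  unfold D01, fK; intros h. apply (ex_derive_continuous (K:=R_AbsRing) (V:=R_NormedModule)).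
  unfold Rpower. auto_derive. split; [lra|split; [lra|auto]].
Qed.

Lemma fK_pos z m x : D01 x -> 0 <= fK z m x.
Proof. intros _. unfold fK. apply Rmult_le_pos; left; apply Rpower_pos. Qed.

Lemma fK_le z m x : D01 x -> 1 <= m -> fK z m x <= Rpower x (z - 1).
Proof.
  unfold D01, fK; intros h hm. rewrite <- (Rmult_1_r (Rpower x (z-1))) at 2.
  apply Rmult_le_compat_l. left; apply Rpower_pos. apply Rpower_le1; lra.
Qed.

Lemma RInt_pow z a b : 0 < z -> 0 < a -> a <= b ->
  is_RInt (fun t => Rpower t (z - 1)) a b (Rpower b z / z - Rpower a z / z).
Proof.
  intros hz ha hab.
  apply (is_RInt_derive (V:=R_CompleteNormedModule) (fun t => Rpower t z / z)).
  - intros t ht. unfold Rmin in ht; destruct (Rle_dec a b); try lra.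
    unfold Rpower. auto_derive. lra.
    replace ((z - 1) * ln t) with (z * ln t + - ln t) by ring.
    rewrite exp_plus, exp_Ropp, exp_ln by lra. field. lra.
  - intros t ht. unfold Rmin in ht; destruct (Rle_dec a b); try lra. apply continuous_Rpower. lra.
Qed.

Lemma fK_bound z m : 0 < z -> 1 <= m -> forall a b, D01 a -> D01 b -> a <= b ->
  RInt (fK z m) a b <= / z.
Proof.
  intros hz hm a b ha hb hab. unfold D01 in *.
  assert (Hi := RInt_pow z a b hz (proj1 ha) hab).
  apply Rle_trans with (RInt (fun t => Rpower t (z - 1)) a b).
  - apply RInt_le; auto.
    + apply (gd_ex D01 _ _ _ a b gd_01); auto. apply fK_cont.
    + eexists; exact Hi.
    + intros x hx. apply fK_le; red; lra.
  - rewrite (is_RInt_unique _ _ _ _ Hi).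
    assert (Rpower b z <= 1) by (apply Rpower_le1; lra).
    assert (0 < Rpower a z) by apply Rpower_pos.
    unfold Rdiv. assert (0 < / z) by (apply Rinv_0_lt_compat; auto). nra.
Qed.

Definition K (z m : R) : R := RInt_gen (fK z m) (at_right 0) (at_left 1).

Lemma K_spec z m : 0 < z -> 1 <= m -> is_RInt_gen (fK z m) (at_right 0) (at_left 1) (K z m).
Proof.
  intros hz hm.
  destruct (gd_exists D01 _ _ (fK z m) _ gd_01 (fK_cont z m) (fK_pos z m) (fK_bound z m hz hm)) as [l Hl].
  unfold K. rewrite (is_RInt_gen_unique _ _ Hl). exact Hl.
Qed.

Lemma K_le z m a b : 0 < z -> 1 <= m -> D01 a -> D01 b -> a <= b -> RInt (fK z m) a b <= K z m.
Proof.
  intros hz hm ha hb hab.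
  apply (gd_le D01 _ _ (fK z m) (K z m) a b gd_01 (fK_cont z m) (fK_pos z m) (K_spec z m hz hm)); auto.
Qed.

Lemma K_ub z m X : 0 < z -> 1 <= m -> (forall a b, D01 a -> D01 b -> a <= b -> RInt (fK z m) a b <= X) ->
  K z m <= X.
Proof.
  intros hz hm H. apply (gd_ub D01 _ _ (fK z m) (K z m) X gd_01 (K_spec z m hz hm) H).
Qed.

Lemma K_nonneg z m : 0 < z -> 1 <= m -> 0 <= K z m.
Proof.
  intros hz hm. assert (H := K_le z m (1/2) (1/2) hz hm ltac:(red;lra) ltac:(red;lra) (Rle_refl _)).
  rewrite RInt_point in H. exact H.
Qed.

Lemma lim_right0 (F : R -> R) C z : 0 < z -> 0 < C ->
  (forall t, 0 < t < 1 -> 0 <= F t <= C * Rpower t z) -> filterlim F (at_right 0) (locally 0).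
Proof.
  intros hz hC HF. apply filterlim_locally. intros eps.
  assert (he : 0 < eps / C) by (apply Rdiv_lt_0_compat; [apply cond_pos|auto]).
  destruct (Rpower_small z hz (eps / C) he) as [d [hd Hd]].
  assert (hd' : 0 < Rmin d 1) by (apply Rmin_pos; lra).
  exists (mkposreal _ hd'). intros y Hy Hy0. apply ballR_lt in Hy. simpl in Hy.
  assert (Rmin d 1 <= d) by apply Rmin_l. assert (Rmin d 1 <= 1) by apply Rmin_r.
  apply ballR. specialize (HF y ltac:(lra)). specialize (Hd y ltac:(lra)).
  assert (C * Rpower y z < eps).
  { replace (pos eps) with (C * (eps / C)) by (field; lra). apply Rmult_lt_compat_l; auto. }
  rewrite Rminus_0_r, Rabs_right; lra.
Qed.

Lemma lim_left1 (F : R -> R) C m : 0 < m -> 0 < C ->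
  (forall t, 0 < t < 1 -> 0 <= F t <= C * Rpower (1 - t) m) -> filterlim F (at_left 1) (locally 0).
Proof.
  intros hz hC HF. apply filterlim_locally. intros eps.
  assert (he : 0 < eps / C) by (apply Rdiv_lt_0_compat; [apply cond_pos|auto]).
  destruct (Rpower_small m hz (eps / C) he) as [d [hd Hd]].
  assert (hd' : 0 < Rmin d 1) by (apply Rmin_pos; lra).
  exists (mkposreal _ hd'). intros y Hy Hy0. apply ballR_lt in Hy. simpl in Hy.
  assert (Rmin d 1 <= d) by apply Rmin_l. assert (Rmin d 1 <= 1) by apply Rmin_r.
  apply ballR. specialize (HF y ltac:(lra)). specialize (Hd (1 - y) ltac:(lra)).
  assert (C * Rpower (1 - y) m < eps).
  { replace (pos eps) with (C * (eps / C)) by (field; lra). apply Rmult_lt_compat_l; auto. }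
  rewrite Rminus_0_r, Rabs_right; lra.
Qed.

Lemma lim_cont_left (F : R -> R) x : continuous F x -> filterlim F (at_left x) (locally (F x)).
Proof.
  intros H. apply (filterlim_filter_le_1 (F := locally x)); [apply filter_le_within|exact H].
Qed.

Lemma K_1 z : 0 < z -> K z 1 = / z.
Proof.
  intros hz.
  assert (H : is_RInt_gen (fK z 1) (at_right 0) (at_left 1) (/ z - 0)).
  { apply (gd_FTC D01 _ _ (fun t => Rpower t z / z)).
    - apply gd_01.
    - intros t ht. red in ht. unfold fK, Rpower. auto_derive. lra.
      replace ((1 - 1) * ln (1 - t)) with 0 by ring. rewrite exp_0.
      replace ((z - 1) * ln t) with (z * ln t + - ln t) by ring.
      rewrite exp_plus, exp_Ropp, exp_ln by lra. field. lra.
    - apply fK_cont.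
    - apply (lim_right0 _ (/ z) z hz). apply Rinv_0_lt_compat; auto. intros t ht.
      split. unfold Rdiv; apply Rmult_le_pos; [left; apply Rpower_pos|left; apply Rinv_0_lt_compat; auto].
      unfold Rdiv; rewrite Rmult_comm; lra.
    - assert (E : Rpower 1 z / z = / z) by (unfold Rpower; rewrite ln_1, Rmult_0_r, exp_0; field; lra).
      rewrite <- E. apply (lim_cont_left (fun t => Rpower t z / z) 1).
      apply (ex_derive_continuous (K:=R_AbsRing) (V:=R_NormedModule)). unfold Rpower; auto_derive; lra. }
  unfold K. rewrite (is_RInt_gen_unique _ _ H). ring.
Qed.

Lemma K_rec z m : 0 < z -> 1 <= m -> (z + m) * K z (m + 1) = m * K z m.
Proof.
  intros hz hm.
  assert (H1 : is_RInt_gen (fun t => (z + m) * fK z (m + 1) t - m * fK z m t) (at_right 0) (at_left 1) (0 - 0)).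
  { apply (gd_FTC D01 _ _ (fun t => Rpower t z * Rpower (1 - t) m)).
    - apply gd_01.
    - intros t ht. red in ht. unfold fK, Rpower. auto_derive. repeat split; lra.
      replace ((z - 1) * ln t) with (z * ln t + - ln t) by ring.
      replace ((m + 1 - 1) * ln (1 - t)) with (m * ln (1 - t)) by ring.
      replace ((m - 1) * ln (1 - t)) with (m * ln (1 - t) + - ln (1 - t)) by ring.
      rewrite !exp_plus, !exp_Ropp, !exp_ln by lra. unfold Rminus. field. repeat split; lra.
    - intros t ht. red in ht. apply (ex_derive_continuous (K:=R_AbsRing) (V:=R_NormedModule)).
      unfold fK, Rpower. auto_derive. repeat split; lra.
    - apply (lim_right0 _ 1 z hz Rlt_0_1). intros t ht. split.
      + apply Rmult_le_pos; left; apply Rpower_pos.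
      + rewrite Rmult_1_l. rewrite <- (Rmult_1_r (Rpower t z)) at 2.
        apply Rmult_le_compat_l. left; apply Rpower_pos. apply Rpower_le1; lra.
    - apply (lim_left1 _ 1 m ltac:(lra) Rlt_0_1). intros t ht. split.
      + apply Rmult_le_pos; left; apply Rpower_pos.
      + rewrite Rmult_1_l. rewrite Rmult_comm. rewrite <- (Rmult_1_r (Rpower (1 - t) m)) at 2.
        apply Rmult_le_compat_l. left; apply Rpower_pos. apply Rpower_le1; lra. }
  assert (H2 : is_RInt_gen (fun t => (z + m) * fK z (m + 1) t - m * fK z m t) (at_right 0) (at_left 1)
                 ((z + m) * K z (m + 1) - m * K z m)).
  { assert (A := is_RInt_gen_scal (V:=R_NormedModule) (Fa := at_right 0) (Fb := at_left 1) _ (z + m) _ (K_spec z (m + 1) hz ltac:(lra))).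
    assert (B := is_RInt_gen_scal (V:=R_NormedModule) (Fa := at_right 0) (Fb := at_left 1) _ m _ (K_spec z m hz hm)).
    exact (is_RInt_gen_minus _ _ _ _ A B). }
  apply (is_RInt_gen_unique (V:=R_CompleteNormedModule)) in H1.
  apply (is_RInt_gen_unique (V:=R_CompleteNormedModule)) in H2.
  rewrite H1 in H2. lra.
Qed.

Fixpoint prd (z m0 : R) (n : nat) : R :=
  match n with
  | O => 1
  | S k => prd z m0 k * ((m0 + INR k) / (z + m0 + INR k))
  end.

Lemma K_iter z m0 n : 0 < z -> 1 <= m0 -> K z (m0 + INR n) = K z m0 * prd z m0 n.
Proof.
  intros hz hm. induction n as [|n IH].
  - simpl. rewrite Rplus_0_r. ring.
  - rewrite S_INR. simpl prd.
    assert (h0 : 0 <= INR n) by apply pos_INR.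
    assert (R := K_rec z (m0 + INR n) hz ltac:(lra)).
    replace (m0 + (INR n + 1)) with (m0 + INR n + 1) by ring.
    apply (Rmult_eq_reg_l (z + (m0 + INR n))); [|lra].
    rewrite R, IH. field. lra.
Qed.

Lemma ln_1m_lower (x : R) : 0 < x < 1 -> - x / (1 - x) <= ln (1 - x).
Proof.
  intros hx. assert (H := ln_le_m1 (/ (1 - x)) ltac:(apply Rinv_0_lt_compat; lra)).
  rewrite ln_Rinv in H by lra.
  replace (/ (1 - x) - 1) with (x / (1 - x)) in H by (field; lra).
  replace (- x / (1 - x)) with (- (x / (1 - x))) by (field; lra). lra.
Qed.

Lemma key_ineq (y b m : R) : 0 < y <= b -> 2 * b <= m -> 1 <= m ->
  (1 - 2 * b ^ 2 / m) * exp (- y) <= Rpower (1 - y / m) (m - 1).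
Proof.
  intros hy hb hm.
  assert (hx : 0 < y / m < 1).
  { split. apply Rdiv_lt_0_compat; lra. apply (Rmult_lt_reg_r m); [lra|]. unfold Rdiv; rewrite Rmult_assoc, Rinv_l by lra. lra. }
  set (L := ln (1 - y / m)).
  assert (L0 : L <= 0). { unfold L. assert (H := ln_le_m1 (1 - y / m) ltac:(lra)). lra. }
  assert (L1 := ln_1m_lower (y / m) hx). fold L in L1.
  assert (A1 : m * (- (y / m) / (1 - y / m)) <= m * L) by (apply Rmult_le_compat_l; lra).
  replace (m * (- (y / m) / (1 - y / m))) with (- y - y * y / (m - y)) in A1 by (field; split; lra).
  assert (A2 : - y - y * y / (m - y) <= (m - 1) * L) by (replace ((m - 1) * L) with (m * L - L) by ring; lra).
  set (q := y * y / (m - y)) in *.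
  assert (Hq : q <= 2 * b ^ 2 / m).
  { unfold q, Rdiv. apply Rle_trans with (b * b * / (m - y)).
    - apply Rmult_le_compat_r; [left; apply Rinv_0_lt_compat; lra | nra].
    - replace (2 * b ^ 2 * / m) with (b * b * / (m / 2)) by (field; lra).
      apply Rmult_le_compat_l; [nra|]. apply Rinv_le_contravar; lra. }
  assert (Hexp : 1 + - q <= exp (- q)) by apply exp_ineq1_le.
  assert (ey : 0 < exp (- y)) by apply exp_pos.
  unfold Rpower. fold L.
  apply Rle_trans with (exp (- y - q)); [|apply exp_le; lra].
  unfold Rminus at 2. rewrite exp_plus.
  rewrite (Rmult_comm _ (exp (- y))). apply Rmult_le_compat_l; lra.
Qed.

Lemma RInt_le_ex (f g : R -> R) a b : a <= b -> ex_RInt f a b -> ex_RInt g a b ->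
  (forall x, a < x < b -> f x <= g x) -> RInt f a b <= RInt g a b.
Proof. intros; apply RInt_le; auto. Qed.

Lemma K_upper z m : 0 < z -> 1 < m -> K z m * Rpower (m - 1) z <= Gamma z.
Proof.
  intros hz hm. set (l := m - 1).
  assert (hl : 0 < l) by (unfold l; lra).
  assert (Hpl : 0 < Rpower l z) by apply Rpower_pos.
  set (g1 := fun y => Rpower y (z - 1) * exp (- (l * y))).
  assert (g1c : forall y, 0 < y -> continuous g1 y).
  { intros y hy. apply (ex_derive_continuous (K:=R_AbsRing) (V:=R_NormedModule)).
    unfold g1, Rpower. auto_derive. auto. }
  cut (K z m <= Gamma z / Rpower l z).
  { intros H. apply (Rmult_le_compat_r (Rpower l z)) in H; [|lra].
    unfold Rdiv in H. rewrite Rmult_assoc, Rinv_l, Rmult_1_r in H by lra. exact H. }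
  apply K_ub; [auto|lra|]. intros a b ha hb hab. red in ha, hb.
  assert (exg : ex_RInt g1 a b).
  { apply (ex_RInt_continuous (V:=R_CompleteNormedModule)). intros t ht. apply g1c.
    unfold Rmin in ht; destruct (Rle_dec a b); lra. }
  apply Rle_trans with (RInt g1 a b).
  - apply RInt_le_ex; auto.
    + apply (gd_ex D01 _ _ _ a b gd_01); auto. apply fK_cont.
    + intros y hy. unfold fK, g1. apply Rmult_le_compat_l. left; apply Rpower_pos.
      unfold Rpower. apply exp_le. assert (H := ln_le_m1 (1 - y) ltac:(lra)).
      unfold l. nra.
  - assert (Hsub := RInt_comp_lin (V:=R_CompleteNormedModule) (gam z) l 0 a b).
    rewrite !Rplus_0_r in Hsub.
    assert (exG : ex_RInt (gam z) (l * a) (l * b)).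
    { apply (gd_ex Dpos _ _ _ _ _ gd_pos); [apply gam_cont|red;nra|red;nra]. }
    specialize (Hsub exG).
    assert (HG := Gamma_le z (l * a) (l * b) hz ltac:(nra) ltac:(nra)).
    rewrite <- Hsub in HG.
    assert (E : RInt (fun y => scal l (gam z (l * y + 0))) a b = RInt (fun y => Rpower l z * g1 y) a b).
    { apply RInt_ext. intros y hy. unfold Rmin in hy; destruct (Rle_dec a b); try lra.
      unfold scal, gam, g1; simpl; unfold mult; simpl. unfold Rpower.
      rewrite Rplus_0_r, ln_mult by lra.
      replace ((z - 1) * (ln l + ln y)) with ((z - 1) * ln l + (z - 1) * ln y) by ring.
      replace (z * ln l) with ((z - 1) * ln l + ln l) by ring.
      rewrite !exp_plus, exp_ln by lra. ring. }
    assert (HG2 : RInt (fun y => Rpower l z * g1 y) a b <= Gamma z) by (rewrite <- E; exact HG).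
    clear HG. rename HG2 into HG. rewrite (RInt_scal (V:=R_CompleteNormedModule)) in HG by auto.
    unfold scal in HG; simpl in HG; unfold mult in HG; simpl in HG.
    apply (Rmult_le_reg_l (Rpower l z)); auto.
    replace (Rpower l z * (Gamma z / Rpower l z)) with (Gamma z) by (field; lra). exact HG.
Qed.

Lemma K_lower z m a b : 0 < z -> 0 < a -> a <= b -> 1 <= m -> 2 * b <= m ->
  (1 - 2 * b ^ 2 / m) * RInt (gam z) a b <= Rpower m z * RInt (fK z m) (a / m) (b / m).
Proof.
  intros hz ha hab hm hbm.
  assert (Dam : D01 (a / m)).
  { red. split. apply Rdiv_lt_0_compat; lra. apply (Rmult_lt_reg_r m); [lra|]. unfold Rdiv; rewrite Rmult_assoc, Rinv_l by lra. lra. }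
  assert (Dbm : D01 (b / m)).
  { red. split. apply Rdiv_lt_0_compat; lra. apply (Rmult_lt_reg_r m); [lra|]. unfold Rdiv; rewrite Rmult_assoc, Rinv_l by lra. lra. }
  assert (Hsub := RInt_comp_lin (V:=R_CompleteNormedModule) (fK z m) (/ m) 0 a b).
  rewrite !Rplus_0_r in Hsub.
  replace (/ m * a) with (a / m) in Hsub by (unfold Rdiv; ring).
  replace (/ m * b) with (b / m) in Hsub by (unfold Rdiv; ring).
  specialize (Hsub (gd_ex D01 _ _ _ _ _ gd_01 (fK_cont z m) Dam Dbm)).
  rewrite <- Hsub.
  assert (Hpm : 0 < Rpower m z) by apply Rpower_pos.
  assert (exG : ex_RInt (gam z) a b) by (apply (gd_ex Dpos _ _ _ _ _ gd_pos); [apply gam_cont|red;lra|red;lra]).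
  set (c := (1 - 2 * b ^ 2 / m) / Rpower m z).
  apply Rle_trans with (Rpower m z * RInt (fun y => c * gam z y) a b).
  - rewrite (RInt_scal (V:=R_CompleteNormedModule)) by auto.
    unfold scal; simpl; unfold mult; simpl. unfold c. right. field. lra.
  - apply Rmult_le_compat_l; [lra|].
    apply RInt_le_ex; auto.
    + apply (ex_RInt_scal (V:=R_NormedModule)). exact exG.
    + apply (ex_RInt_comp_lin (fK z m) (/ m) 0 a b). rewrite !Rplus_0_r.
      replace (/ m * a) with (a / m) by (unfold Rdiv; ring).
      replace (/ m * b) with (b / m) by (unfold Rdiv; ring).
      exact (gd_ex D01 _ _ _ _ _ gd_01 (fK_cont z m) Dam Dbm).
    + intros y hy.
      unfold scal; simpl; unfold mult; simpl. unfold c, gam, fK.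
      try rewrite Rplus_0_r.
      assert (E : / m * Rpower (/ m * y) (z - 1) = Rpower y (z - 1) / Rpower m z).
      { unfold Rpower. rewrite ln_mult, ln_Rinv by (try apply Rinv_0_lt_compat; lra).
        replace ((z - 1) * (- ln m + ln y)) with ((z - 1) * ln y + - (z * ln m) + ln m) by ring.
        rewrite !exp_plus, exp_Ropp, exp_ln by lra. field. split; [apply Rgt_not_eq, exp_pos|lra]. }
      assert (KI := key_ineq y b m ltac:(lra) hbm hm).
      replace (y / m) with (/ m * y) in KI by (unfold Rdiv; ring).
      rewrite <- (Rmult_assoc (/ m)), E.
      assert (0 <= Rpower y (z - 1) / Rpower m z) by (unfold Rdiv; apply Rmult_le_pos; [left; apply Rpower_pos|left; apply Rinv_0_lt_compat; auto]).
      replace ((1 - 2 * b ^ 2 / m) / Rpower m z * (Rpower y (z - 1) * exp (- y)))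
        with (Rpower y (z - 1) / Rpower m z * ((1 - 2 * b ^ 2 / m) * exp (- y))) by (field; lra).
      apply Rmult_le_compat_l; auto.
Qed.

Lemma ev_large m0 B : exists N, forall n, (N <= n)%nat -> B < m0 + INR n.
Proof.
  assert (H := is_lim_seq_INR). apply is_lim_seq_spec in H. destruct (H (B - m0)) as [N HN].
  exists N. intros n hn. specialize (HN n hn). simpl in HN. lra.
Qed.

Lemma div_swap_lt A e x : 0 < e -> 0 < x -> A / e < x -> A / x < e.
Proof.
  intros he hx H. apply (Rmult_lt_compat_r e) in H; auto.
  unfold Rdiv in *. rewrite Rmult_assoc, Rinv_l, Rmult_1_r in H by lra.
  apply (Rmult_lt_reg_r x); auto. rewrite Rmult_assoc, Rinv_l, Rmult_1_r by lra. lra.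
Qed.

Lemma exp_small d : 0 < d <= 1/2 -> exp d <= 1 + 2 * d.
Proof.
  intros hd. assert (H := exp_ineq1_le (- d)).
  assert (E : exp d = / exp (- d)) by (rewrite exp_Ropp, Rinv_inv; auto).
  rewrite E. apply Rle_trans with (/ (1 - d)).
  - apply Rinv_le_contravar; lra.
  - apply (Rmult_le_reg_r (1 - d)); [lra|]. rewrite Rinv_l by lra. nra.
Qed.

Lemma lim_A z m0 : 0 < z -> 1 <= m0 ->
  is_lim_seq (fun n => Rpower (m0 + INR n) z * K z (m0 + INR n)) (Gamma z).
Proof.
  intros hz hm0. apply is_lim_seq_spec. intros eps.
  set (Gm := Gamma z). assert (hG : 0 <= Gm) by (apply Gamma_nonneg; auto).
  assert (he := cond_pos eps).
  destruct (gd_approx Dpos _ _ (gam z) Gm (Gm - eps / 2) gd_pos (Gamma_spec z hz) ltac:(lra))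
    as [a [b [ha [hb [hab HGab]]]]].
  red in ha, hb.
  set (G := RInt (gam z) a b) in *.
  assert (exG : ex_RInt (gam z) a b) by (apply (gd_ex Dpos _ _ _ _ _ gd_pos); [apply gam_cont|red;lra|red;lra]).
  assert (G0 : 0 <= G) by (apply RInt_ge_0; auto; intros; apply gam_pos; red; lra).
  assert (t1 : 0 <= z * (2 * Gm + 1) / eps).
  { unfold Rdiv. apply Rmult_le_pos; [nra|left; apply Rinv_0_lt_compat; auto]. }
  assert (t2 : 0 <= 4 * b ^ 2 * G / eps).
  { unfold Rdiv. apply Rmult_le_pos; [nra|left; apply Rinv_0_lt_compat; auto]. }
  destruct (ev_large m0 (1 + 2 * z + z * (2 * Gm + 1) / eps + 2 * b + 4 * b ^ 2 * G / eps + 1)) as [N HN].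
  exists N. intros n hn. specialize (HN n hn). set (m := m0 + INR n) in *.
  assert (hm : 1 < m) by lra.
  assert (K0 : 0 <= K z m) by (apply K_nonneg; lra).
  assert (Up : Rpower m z * K z m < Gm + eps).
  { assert (KU := K_upper z m hz hm). fold Gm in KU.
    set (d := z / (m - 1)).
    assert (hd : 0 < d <= 1/2).
    { unfold d. split. apply Rdiv_lt_0_compat; lra.
      apply (Rmult_le_reg_r (m - 1)); [lra|]. unfold Rdiv; rewrite Rmult_assoc, Rinv_l by lra. lra. }
    assert (hd2 : d * (2 * Gm + 1) < eps).
    { replace (d * (2 * Gm + 1)) with (z * (2 * Gm + 1) / (m - 1)) by (unfold d; field; lra).
      apply div_swap_lt; auto; lra. }
    assert (R1 : Rpower m z <= Rpower (m - 1) z * (1 + 2 * d)).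
    { assert (Hl : z * (ln m - ln (m - 1)) <= d).
      { rewrite <- ln_div by lra. assert (H := ln_le_m1 (m / (m - 1)) ltac:(apply Rdiv_lt_0_compat; lra)).
        replace (m / (m - 1) - 1) with (1 / (m - 1)) in H by (field; lra).
        unfold d. replace (z / (m - 1)) with (z * (1 / (m - 1))) by (field; lra).
        apply Rmult_le_compat_l; lra. }
      assert (E : Rpower m z = Rpower (m - 1) z * exp (z * (ln m - ln (m - 1)))).
      { unfold Rpower. rewrite <- exp_plus. f_equal. ring. }
      rewrite E. apply Rmult_le_compat_l; [left; apply Rpower_pos|].
      apply Rle_trans with (exp d); [apply exp_le; auto| apply exp_small; auto]. }
    apply Rle_lt_trans with (Rpower (m - 1) z * (1 + 2 * d) * K z m).
    { apply Rmult_le_compat_r; auto. }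
    replace (Rpower (m - 1) z * (1 + 2 * d) * K z m) with ((K z m * Rpower (m - 1) z) * (1 + 2 * d)) by ring.
    apply Rle_lt_trans with (Gm * (1 + 2 * d)). { apply Rmult_le_compat_r; lra. }
    nra. }
  assert (Lo : Gm - eps < Rpower m z * K z m).
  { assert (KL := K_lower z m a b hz ha hab ltac:(lra) ltac:(lra)). fold G in KL.
    assert (Dam : D01 (a / m)).
    { red. split. apply Rdiv_lt_0_compat; lra. apply (Rmult_lt_reg_r m); [lra|]. unfold Rdiv; rewrite Rmult_assoc, Rinv_l by lra. lra. }
    assert (Dbm : D01 (b / m)).
    { red. split. apply Rdiv_lt_0_compat; lra. apply (Rmult_lt_reg_r m); [lra|]. unfold Rdiv; rewrite Rmult_assoc, Rinv_l by lra. lra. }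
    assert (Kle := K_le z m (a / m) (b / m) hz ltac:(lra) Dam Dbm ltac:(unfold Rdiv; apply Rmult_le_compat_r; [left; apply Rinv_0_lt_compat; lra|lra])).
    assert (Hpm : 0 < Rpower m z) by apply Rpower_pos.
    assert (X1 : Rpower m z * RInt (fK z m) (a / m) (b / m) <= Rpower m z * K z m) by (apply Rmult_le_compat_l; lra).
    assert (X2 : 2 * b ^ 2 * G / m < eps / 2).
    { apply div_swap_lt; [lra|lra|]. replace (2 * b ^ 2 * G / (eps / 2)) with (4 * b ^ 2 * G / eps) by (field; lra). lra. }
    replace ((1 - 2 * b ^ 2 / m) * G) with (G - 2 * b ^ 2 * G / m) in KL by (field; lra).
    lra. }
  apply Rabs_def1; lra.
Qed.

Lemma prd_pos z m0 n : 0 < z -> 0 < m0 -> 0 < prd z m0 n.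
Proof.
  intros hz hm. induction n; simpl. lra. apply Rmult_lt_0_compat; auto.
  assert (0 <= INR n) by apply pos_INR. apply Rdiv_lt_0_compat; lra.
Qed.

Lemma prd_id a w n : 0 < a -> 1 <= w ->
  prd (a + w) 1 n * w * (a + w + INR n) = prd w 1 n * prd a w n * (w + INR n) * (a + w).
Proof.
  intros ha hw. induction n as [|n IH].
  - simpl. ring.
  - assert (h0 : 0 <= INR n) by apply pos_INR.
    simpl prd. rewrite S_INR.
    assert (E : prd (a + w) 1 n = prd w 1 n * prd a w n * (w + INR n) * (a + w) / (w * (a + w + INR n))).
    { rewrite <- IH. field. lra. }
    rewrite E. field. repeat split; lra.
Qed.

Lemma lim_ratio p q : 0 < q -> is_lim_seq (fun n => (p + INR n) / (q + INR n)) 1.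
Proof.
  intros hq. apply is_lim_seq_spec. intros eps.
  assert (he := cond_pos eps).
  destruct (ev_large q (Rabs (p - q) / eps)) as [N HN].
  exists N. intros n hn. specialize (HN n hn).
  assert (h0 : 0 <= INR n) by apply pos_INR.
  replace ((p + INR n) / (q + INR n) - 1) with ((p - q) / (q + INR n)) by (field; lra).
  unfold Rdiv. rewrite Rabs_mult, Rabs_Rinv by lra. rewrite (Rabs_right (q + INR n)) by lra.
  apply div_swap_lt; auto; lra.
Qed.

Lemma lim_pow_ratio p q a : 0 < q -> is_lim_seq (fun n => Rpower ((p + INR n) / (q + INR n)) a) 1.
Proof.
  intros hq.
  assert (E : Rpower 1 a = 1) by (unfold Rpower; rewrite ln_1, Rmult_0_r; apply exp_0).
  assert (Hc : continuity_pt (fun x => Rpower x a) 1).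
  { apply continuity_pt_filterlim. apply continuous_Rpower. lra. }
  assert (H := is_lim_seq_continuous (fun x => Rpower x a) _ 1 Hc (lim_ratio p q hq)).
  cbv beta in H. rewrite E in H. exact H.
Qed.

Lemma Beta_Gamma a w : 0 < a -> 1 <= w -> K a w * Gamma (a + w) = Gamma a * Gamma w.
Proof.
  intros ha hw.
  assert (S1 := lim_A a w ha hw).
  assert (S2 := lim_A w 1 ltac:(lra) (Rle_refl 1)).
  assert (S3 := lim_A (a + w) 1 ltac:(lra) (Rle_refl 1)).
  assert (C1 := lim_pow_ratio w 1 a Rlt_0_1).
  assert (C2 := lim_ratio (a + w) w ltac:(lra)).
  assert (P1 := is_lim_seq_mult' _ _ _ _ S1 S2).
  assert (P2 := is_lim_seq_mult' _ _ _ _ (is_lim_seq_mult' _ _ _ _ S3 C1) C2).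
  assert (P3 := is_lim_seq_scal_l _ (K a w) _ P2). simpl in P3.
  assert (Eq : forall n,
    Rpower (w + INR n) a * K a (w + INR n) * (Rpower (1 + INR n) w * K w (1 + INR n)) =
    K a w * (Rpower (1 + INR n) (a + w) * K (a + w) (1 + INR n) * Rpower ((w + INR n) / (1 + INR n)) a *
             ((a + w + INR n) / (w + INR n)))).
  { intros n. assert (h0 : 0 <= INR n) by apply pos_INR.
    rewrite (K_iter a w n ha hw), (K_iter w 1 n ltac:(lra) (Rle_refl 1)), (K_iter (a + w) 1 n ltac:(lra) (Rle_refl 1)).
    rewrite K_1, K_1 by lra.
    rewrite Rpower_plus.
    assert (E1 : Rpower ((w + INR n) / (1 + INR n)) a * Rpower (1 + INR n) a = Rpower (w + INR n) a).
    { rewrite Rpower_mult_distr by (try apply Rdiv_lt_0_compat; lra). f_equal. field. lra. }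
    rewrite <- E1.
    assert (E2 : prd (a + w) 1 n = prd w 1 n * prd a w n * (w + INR n) * (a + w) / (w * (a + w + INR n))).
    { rewrite <- (prd_id a w n ha hw). field. lra. }
    rewrite E2. field. repeat split; lra. }
  assert (P1' := is_lim_seq_ext _ _ _ Eq P1).
  apply is_lim_seq_unique in P1'. apply is_lim_seq_unique in P3.
  rewrite P1' in P3. injection P3. intros h. rewrite h. ring.
Qed.

Definition psum (s : nat -> R) (N : nat) : R := sum_f_R0 (fun n => / (s n) ^ 2) N.

Lemma psum_S (s : nat -> R) N : psum s (S N) = psum s N + / (s (S N)) ^ 2.
Proof. reflexivity. Qed.

Lemma s_ge0 (s : nat -> R) : 0 < s O -> (forall n, s n <= s (S n)) -> forall n, s O <= s n.
Proof. intros h hm n. induction n; [lra| specialize (hm n); lra]. Qed.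

Lemma term_pos (s : nat -> R) n : 0 < s n -> 0 < / (s n) ^ 2.
Proof. intros h. apply Rinv_0_lt_compat, pow_lt; auto. Qed.

Lemma psum_mono (s : nat -> R) : (forall n, 0 < s n) -> forall N k, psum s N <= psum s (N + k).
Proof.
  intros hs N k. induction k.
  - rewrite Nat.add_0_r; lra.
  - rewrite Nat.add_succ_r, psum_S. assert (H := term_pos s (S (N + k)) (hs _)). lra.
Qed.

Lemma psum_le_c (s : nat -> R) c : (forall n, 0 < s n) -> infinite_sum (fun n => / (s n) ^ 2) c ->
  forall N, psum s N <= c.
Proof.
  intros hs Hc N. apply Rnot_lt_le; intro h.
  destruct (Hc (psum s N - c)) as [N' HN']; [lra|].
  specialize (HN' (N + N')%nat ltac:(lia)). unfold Rdist in HN'.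
  assert (H := psum_mono s hs N N'). change (sum_f_R0 (fun n => / s n ^ 2) (N + N')) with (psum s (N + N')) in HN'.
  apply Rabs_def2 in HN'. lra.
Qed.

Lemma term_le_psum (s : nat -> R) : (forall n, 0 < s n) -> forall n, / (s n) ^ 2 <= psum s n.
Proof.
  intros hs n. destruct n.
  - unfold psum; simpl; lra.
  - rewrite psum_S. assert (H := psum_mono s hs 0 n). simpl in H.
    assert (H0 : psum s 0 = / (s 0%nat) ^ 2) by reflexivity.
    assert (H1 := term_pos s 0 (hs 0%nat)). lra.
Qed.

Lemma pp_S (s : nat -> R) t N : partial_prod s t (S N) = partial_prod s t N * (1 - t ^ 2 / (s (S N)) ^ 2).
Proof. reflexivity. Qed.

Lemma a_bounds (s : nat -> R) c t n : (forall n, 0 < s n) -> (forall n, / (s n) ^ 2 <= c) -> c * t ^ 2 <= 1 ->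
  0 <= t ^ 2 / (s n) ^ 2 <= 1 /\ t ^ 2 / (s n) ^ 2 = t ^ 2 * / (s n) ^ 2.
Proof.
  intros hs hc ht. assert (H := term_pos s n (hs n)). assert (t2 : 0 <= t ^ 2) by (apply pow2_ge_0).
  assert (hcn := hc n). unfold Rdiv. split; [split|reflexivity].
  - apply Rmult_le_pos; lra.
  - apply Rle_trans with (t ^ 2 * c). apply Rmult_le_compat_l; lra. lra.
Qed.

Lemma pp_bounds (s : nat -> R) c t : (forall n, 0 < s n) -> (forall n, / (s n) ^ 2 <= c) -> c * t ^ 2 <= 1 ->
  forall N, (0 <= partial_prod s t N <= 1) /\ 1 - t ^ 2 * psum s N <= partial_prod s t N.
Proof.
  intros hs hc ht N. induction N.
  - destruct (a_bounds s c t 0 hs hc ht) as [[h1 h2] h3]. change (partial_prod s t 0) with (1 - t ^ 2 / (s 0%nat) ^ 2).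
    change (psum s 0) with (/ (s 0%nat) ^ 2). rewrite h3 in *. lra.
  - destruct (a_bounds s c t (S N) hs hc ht) as [[h1 h2] h3].
    rewrite pp_S, psum_S. destruct IHN as [[i1 i2] i3].
    set (a := t ^ 2 / (s (S N)) ^ 2) in *. rewrite Rmult_plus_distr_l, <- h3.
    split; [split|]; nra.
Qed.

Lemma pp_tail (s : nat -> R) c t : (forall n, 0 < s n) -> (forall n, / (s n) ^ 2 <= c) -> c * t ^ 2 <= 1 ->
  forall N k, 0 <= partial_prod s t N - partial_prod s t (N + k) <= t ^ 2 * (psum s (N + k) - psum s N).
Proof.
  intros hs hc ht N k. induction k.
  - rewrite Nat.add_0_r. lra.
  - rewrite Nat.add_succ_r, pp_S, psum_S.
    destruct (a_bounds s c t (S (N + k)) hs hc ht) as [[h1 h2] h3].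
    destruct (pp_bounds s c t hs hc ht (N + k)) as [[i1 i2] i3].
    set (a := t ^ 2 / (s (S (N + k))) ^ 2) in *.
    replace (t ^ 2 * (psum s (N + k) + / s (S (N + k)) ^ 2 - psum s N))
      with (t ^ 2 * (psum s (N + k) - psum s N) + t ^ 2 * / s (S (N + k)) ^ 2) by ring.
    rewrite <- h3. nra.
Qed.

Lemma g_lb (s : nat -> R) c (g : R -> R) t : (forall n, 0 < s n) -> infinite_sum (fun n => / (s n) ^ 2) c ->
  Un_cv (partial_prod s t) (g t) -> c * t ^ 2 <= 1 -> 1 - c * t ^ 2 <= g t.
Proof.
  intros hs Hc Hg ht.
  assert (hc : forall n, / (s n) ^ 2 <= c) by (intros n; eapply Rle_trans; [apply term_le_psum; auto|apply psum_le_c; auto]).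
  apply is_lim_seq_Reals in Hg.
  assert (H := is_lim_seq_le (fun _ => 1 - c * t ^ 2) (partial_prod s t) _ _ ltac:(intros N; destruct (pp_bounds s c t hs hc ht N) as [_ h]; assert (psum s N <= c) by (apply psum_le_c; auto); assert (0 <= t ^ 2) by apply pow2_ge_0; nra) (is_lim_seq_const _) Hg).
  exact H.
Qed.

Lemma g_tail (s : nat -> R) c (g : R -> R) t N : (forall n, 0 < s n) -> infinite_sum (fun n => / (s n) ^ 2) c ->
  Un_cv (partial_prod s t) (g t) -> c * t ^ 2 <= 1 ->
  Rabs (g t - partial_prod s t N) <= t ^ 2 * (c - psum s N).
Proof.
  intros hs Hc Hg ht.
  assert (hc : forall n, / (s n) ^ 2 <= c) by (intros n; eapply Rle_trans; [apply term_le_psum; auto|apply psum_le_c; auto]).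
  apply is_lim_seq_Reals in Hg. apply (is_lim_seq_incr_n _ N) in Hg.
  assert (t2 : 0 <= t ^ 2) by apply pow2_ge_0.
  assert (U := is_lim_seq_le (fun k => partial_prod s t (k + N)) (fun _ => partial_prod s t N) _ _
     ltac:(intros k; destruct (pp_tail s c t hs hc ht N k) as [h _]; rewrite Nat.add_comm; lra) Hg (is_lim_seq_const _)).
  assert (L := is_lim_seq_le (fun _ => partial_prod s t N - t ^ 2 * (c - psum s N)) (fun k => partial_prod s t (k + N)) _ _
     ltac:(intros k; destruct (pp_tail s c t hs hc ht N k) as [_ h]; rewrite (Nat.add_comm k N);
           assert (psum s (N + k) <= c) by (apply psum_le_c; auto); nra) (is_lim_seq_const _) Hg).
  simpl in U, L. apply Rabs_le; lra.
Qed.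

Lemma pp_cont (s : nat -> R) t N : (forall n, 0 < s n) -> continuous (fun x => partial_prod s x N) t.
Proof.
  intros hs. induction N.
  - apply (ex_derive_continuous (K:=R_AbsRing) (V:=R_NormedModule)). simpl. auto_derive.
    auto.
  - change (continuous (fun x => partial_prod s x N * (1 - x ^ 2 / (s (S N)) ^ 2)) t).
    apply (continuous_mult (K:=R_AbsRing) (fun x => partial_prod s x N) (fun x => 1 - x ^ 2 / (s (S N)) ^ 2)); auto.
    apply (ex_derive_continuous (K:=R_AbsRing) (V:=R_NormedModule)). auto_derive.
    auto.
Qed.

Lemma g_cont (s : nat -> R) c (g : R -> R) t : (forall n, 0 < s n) -> infinite_sum (fun n => / (s n) ^ 2) c ->
  (forall x, Un_cv (partial_prod s x) (g x)) -> 0 < c -> c * t ^ 2 < 1 -> continuous g t.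
Proof.
  intros hs Hc Hg hc0 ht.
  assert (hsc : 0 < sqrt c) by (apply sqrt_lt_R0; auto).
  assert (hr : 0 < / sqrt c) by (apply Rinv_0_lt_compat; auto).
  assert (Ball : forall y, Rabs y < / sqrt c -> c * y ^ 2 < 1).
  { intros y hy. assert (h1 : Rabs y * sqrt c < 1).
    { apply (Rmult_lt_compat_r (sqrt c)) in hy; auto. rewrite Rinv_l in hy; lra. }
    assert (h2 : 0 <= Rabs y * sqrt c) by (apply Rmult_le_pos; [apply Rabs_pos|lra]).
    assert (E1 : Rabs y * Rabs y = y ^ 2) by (rewrite <- Rabs_mult; rewrite Rabs_right; [ring| nra]).
    replace (c * y ^ 2) with ((Rabs y * sqrt c) * (Rabs y * sqrt c)).
    nra. replace ((Rabs y * sqrt c) * (Rabs y * sqrt c)) with ((Rabs y * Rabs y) * (sqrt c * sqrt c)) by ring.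
    rewrite E1, sqrt_sqrt by lra. ring. }
  apply continuity_pt_filterlim.
  apply (CVU_continuity (fun n y => partial_prod s y n) g 0 (mkposreal _ hr)).
  - intros eps he.
    destruct (Hc (eps * c)) as [N HN]. { apply Rmult_lt_0_compat; lra. }
    exists N. intros n y hn hy. unfold Boule in hy; simpl in hy. rewrite Rminus_0_r in hy.
    specialize (Ball y hy). specialize (HN n hn). unfold Rdist in HN.
    change (sum_f_R0 (fun n => / s n ^ 2) n) with (psum s n) in HN.
    assert (hle : psum s n <= c) by (apply psum_le_c; auto).
    assert (T := g_tail s c g y n hs Hc (Hg y) ltac:(lra)).
    apply Rabs_def2 in HN. assert (0 <= y ^ 2) by apply pow2_ge_0.
    apply Rle_lt_trans with (y ^ 2 * (c - psum s n)); auto. nra.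
  - intros n y _. apply continuity_pt_filterlim. apply pp_cont; auto.
  - unfold Boule; simpl. rewrite Rminus_0_r.
    apply Rnot_le_lt. intro h. assert (h2 : / sqrt c * / sqrt c <= Rabs t * Rabs t) by (apply Rmult_le_compat; lra).
    rewrite <- Rinv_mult, sqrt_sqrt in h2 by lra.
    assert (E : Rabs t * Rabs t = t ^ 2) by (rewrite <- Rabs_mult; simpl; rewrite Rmult_1_r; apply Rabs_right; nra).
    rewrite E in h2. apply (Rmult_le_compat_l c) in h2; [|lra]. rewrite Rinv_r in h2; lra.
Qed.

Lemma rpow_cont p y0 : 0 < y0 -> continuous (fun y => rpow y p) y0.
Proof.
  intros h. apply (continuous_ext_loc _ (fun y => Rpower y p)).
  - exists (mkposreal y0 h). intros y hy. apply ballR_lt in hy. simpl in hy.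
    unfold rpow. destruct (Rlt_dec 0 y); [auto|lra].
  - apply continuous_Rpower; auto.
Qed.

Lemma rpow_pos_eq x p : 0 < x -> rpow x p = Rpower x p.
Proof. intros h. unfold rpow. destruct (Rlt_dec 0 x); [auto|lra]. Qed.

Lemma Fp_cont (s : nat -> R) c (g : R -> R) beta p t : (forall n, 0 < s n) -> infinite_sum (fun n => / (s n) ^ 2) c ->
  (forall x, Un_cv (partial_prod s x) (g x)) -> 0 < c -> 0 < t -> c * t ^ 2 < 1 ->
  continuous (fun x => rpow (Rabs (g x)) p / Rpower x beta) t.
Proof.
  intros hs Hc Hg hc0 ht ht2.
  assert (glb := g_lb s c g t hs Hc (Hg t) ltac:(lra)).
  assert (gc := g_cont s c g t hs Hc Hg hc0 ht2).
  unfold Rdiv.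
  apply (continuous_mult (K:=R_AbsRing) (fun x => rpow (Rabs (g x)) p) (fun x => / Rpower x beta)).
  - apply (continuous_comp (fun x => Rabs (g x)) (fun y => rpow y p)).
    + apply (continuous_comp g Rabs); auto. apply continuous_Rabs.
    + apply rpow_cont. apply Rabs_pos_lt. lra.
  - apply (continuous_Rinv_comp (fun x => Rpower x beta)). apply continuous_Rpower; auto.
    apply Rgt_not_eq, Rpower_pos.
Qed.

Lemma transfer (s : nat -> R) c (g : R -> R) beta p u1 u2 : (forall n, 0 < s n) -> infinite_sum (fun n => / (s n) ^ 2) c ->
  (forall x, Un_cv (partial_prod s x) (g x)) -> 0 < c -> 0 <= beta < 1 -> 0 < p ->
  0 < u1 -> u1 <= u2 -> u2 < 1 ->
  RInt (fK ((1 - beta) / 2) (p + 1)) u1 u2 <=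
  2 * Rpower c ((1 - beta) / 2) * RInt (fun x => rpow (Rabs (g x)) p / Rpower x beta) (sqrt (u1 / c)) (sqrt (u2 / c)).
Proof.
  intros hs Hc Hg hc0 hb hp hu1 hu12 hu2.
  set (al := (1 - beta) / 2).
  set (t1 := sqrt (u1 / c)). set (t2 := sqrt (u2 / c)).
  set (Fp := fun x => rpow (Rabs (g x)) p / Rpower x beta).
  assert (ht1 : 0 < t1) by (apply sqrt_lt_R0, Rdiv_lt_0_compat; lra).
  assert (ht12 : t1 <= t2) by (apply sqrt_le_1_alt; unfold Rdiv; apply Rmult_le_compat_r; [left; apply Rinv_0_lt_compat|]; lra).
  assert (E1 : c * t1 ^ 2 = u1) by (unfold t1; rewrite pow2_sqrt by (left; apply Rdiv_lt_0_compat; lra); field; lra).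
  assert (E2 : c * t2 ^ 2 = u2) by (unfold t2; rewrite pow2_sqrt by (left; apply Rdiv_lt_0_compat; lra); field; lra).
  assert (Hin : forall x, t1 <= x <= t2 -> u1 <= c * x ^ 2 <= u2).
  { intros x hx. rewrite <- E1, <- E2. split; apply Rmult_le_compat_l; try lra; apply pow_incr; lra. }
  assert (Hsub := is_RInt_comp (V:=R_CompleteNormedModule) (fK al (p + 1)) (fun t => c * t ^ 2) (fun t => 2 * c * t) t1 t2).
  cbv beta in Hsub. rewrite E1, E2 in Hsub.
  assert (Hsub' : is_RInt (fun y => 2 * c * y * fK al (p + 1) (c * y ^ 2)) t1 t2 (RInt (fK al (p + 1)) u1 u2)).
  { apply Hsub.
    - intros x hx. unfold Rmin, Rmax in hx; destruct (Rle_dec t1 t2); try lra.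
      apply fK_cont. red. specialize (Hin x hx). lra.
    - intros x hx. split.
      + auto_derive; auto. ring.
      + apply (ex_derive_continuous (K:=R_AbsRing) (V:=R_NormedModule)). auto_derive. auto. }
  rewrite <- (is_RInt_unique _ _ _ _ Hsub').
  assert (exF : ex_RInt Fp t1 t2).
  { apply (ex_RInt_continuous (V:=R_CompleteNormedModule)). intros x hx.
    unfold Rmin, Rmax in hx; destruct (Rle_dec t1 t2); try lra.
    specialize (Hin x hx). apply (Fp_cont s c g beta p x hs Hc Hg hc0); lra. }
  rewrite <- (RInt_scal (V:=R_CompleteNormedModule)) by auto.
  apply RInt_le_ex; auto.
  - eexists; exact Hsub'.
  - apply (ex_RInt_scal (V:=R_NormedModule)); auto.
  - intros y hy. assert (hy0 : 0 < y) by lra. specialize (Hin y ltac:(lra)).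
    unfold scal; simpl; unfold mult; simpl.
    replace (y * (y * 1)) with (y ^ 2) by ring.
    assert (glb := g_lb s c g y hs Hc (Hg y) ltac:(lra)).
    unfold Fp, fK. rewrite rpow_pos_eq by (apply Rabs_pos_lt; lra).
    rewrite Rabs_right by lra.
    replace (p + 1 - 1) with p by ring.
    assert (EE : 2 * c * y * Rpower (c * y ^ 2) (al - 1) = 2 * Rpower c al * / Rpower y beta).
    { rewrite <- Rpower_Ropp. unfold Rpower. rewrite ln_mult, ln_pow by (try apply pow_lt; lra).
      replace (2 * c * y) with (2 * exp (ln c) * exp (ln y)) by (rewrite !exp_ln; lra).
      rewrite !Rmult_assoc, <- !exp_plus. f_equal. f_equal.
      unfold al; simpl; field. }
    replace (2 * c * y * (Rpower (c * y ^ 2) (al - 1) * Rpower (1 - c * y ^ 2) p))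
      with ((2 * c * y * Rpower (c * y ^ 2) (al - 1)) * Rpower (1 - c * y ^ 2) p) by ring.
    rewrite EE.
    assert (Hp : Rpower (1 - c * y ^ 2) p <= Rpower (g y) p) by (apply Rle_Rpower_l; lra).
    assert (0 < 2 * Rpower c al * / Rpower y beta).
    { apply Rmult_lt_0_compat. apply Rmult_lt_0_compat; [lra|apply Rpower_pos]. apply Rinv_0_lt_compat, Rpower_pos. }
    unfold Rdiv. nra.
Qed.

Lemma Rpower_ge_base x a : 0 < x <= 1 -> 0 < a <= 1 -> x <= Rpower x a.
Proof.
  intros hx ha. unfold Rpower. rewrite <- (exp_ln x) at 1 by lra. apply exp_le.
  assert (ln x <= 0).
  { destruct (Req_dec x 1). subst; rewrite ln_1; lra. left; rewrite <- ln_1; apply ln_increasing; lra. }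
  nra.
Qed.

Lemma Fp_compact (s : nat -> R) c (g : R -> R) beta p t1 t2 : (forall n, 0 < s n) -> infinite_sum (fun n => / (s n) ^ 2) c ->
  (forall x, Un_cv (partial_prod s x) (g x)) -> 0 < c -> 0 < t1 -> t1 <= t2 -> c * t2 ^ 2 < 1 ->
  compact_ints (fun x => rpow (Rabs (g x)) p / Rpower x beta)
     (RInt (fun x => rpow (Rabs (g x)) p / Rpower x beta) t1 t2).
Proof.
  intros hs Hc Hg hc0 ht1 ht12 ht2.
  assert (ex : ex_RInt (fun x => rpow (Rabs (g x)) p / Rpower x beta) t1 t2).
  { apply (ex_RInt_continuous (V:=R_CompleteNormedModule)). intros x hx.
    unfold Rmin, Rmax in hx; destruct (Rle_dec t1 t2); try lra.
    apply (Fp_cont s c g beta p x hs Hc Hg hc0); [lra|].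
    assert (x ^ 2 <= t2 ^ 2) by (apply pow_incr; lra). nra. }
  exists t1, t2, (ex_RInt_Reals_0 _ _ _ ex). split; [lra|]. apply RInt_Reals.
Qed.

Theorem mainTheorem8
  (s : nat -> R) (c : R) (g : R -> R) (beta : R)
  (Hpos : 0 < s O)
  (Hmono : forall n, s n <= s (S n))
  (Hc : infinite_sum (fun n => / (s n) ^ 2) c)
  (Hg : forall x, Un_cv (partial_prod s x) (g x))
  (Hbeta : 0 <= beta < 1) :
  (forall p, 0 < p ->
     forall M, M < / (2 * Rpower c ((1 - beta) / 2)) *
                   (Gamma (p + 1) * Gamma ((1 - beta) / 2)
                    / Gamma ((1 - beta) / 2 + p + 1)) ->
     int0inf_gt (fun x => rpow (Rabs (g x)) p / Rpower x beta) M)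
  /\
  (forall M, M < Gamma ((1 - beta) / 2) / (2 * Rpower c ((1 - beta) / 2)) ->
     exists P, forall p, P < p ->
       int0inf_gt (fun x => rpow (Rabs (g x)) p / Rpower x beta)
                  (M / Rpower p ((1 - beta) / 2))).
Proof.
  assert (hs : forall n, 0 < s n) by (intros n; assert (H := s_ge0 s Hpos Hmono n); lra).
  assert (hc0 : 0 < c).
  { assert (H := psum_le_c s c hs Hc 0). assert (H0 : psum s 0 = / (s 0%nat) ^ 2) by reflexivity.
    assert (H1 := term_pos s 0 (hs 0%nat)). lra. }
  set (al := (1 - beta) / 2).
  assert (hal : 0 < al <= 1/2) by (unfold al; lra).
  set (A := 2 * Rpower c al).
  assert (hA : 0 < A) by (unfold A; assert (H := Rpower_pos c al); lra).
  split.
  - intros p hp M hM.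
    set (w := p + 1).
    assert (hw : 1 <= w) by (unfold w; lra).
    assert (BG := Beta_Gamma al w ltac:(lra) hw).
    assert (hK : Gamma (p + 1) * Gamma al / Gamma (al + p + 1) <= K al w).
    { replace (al + p + 1) with (al + w) by (unfold w; ring). fold w.
      assert (G0 := Gamma_nonneg (al + w) ltac:(lra)).
      destruct (Req_dec (Gamma (al + w)) 0) as [h0|h0].
      - rewrite h0. unfold Rdiv. rewrite Rinv_0, Rmult_0_r. apply K_nonneg; lra.
      - apply (Rmult_le_reg_r (Gamma (al + w))); [lra|].
        unfold Rdiv. rewrite Rmult_assoc, Rinv_l, Rmult_1_r by auto. rewrite BG. lra. }
    assert (hM2 : A * M < K al w).
    { apply (Rmult_lt_compat_l A) in hM; auto. unfold A in hM at 2.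
      rewrite <- Rmult_assoc, Rinv_r, Rmult_1_l in hM by lra. fold A in hM. lra. }
    destruct (gd_approx D01 _ _ (fK al w) (K al w) (A * M) gd_01 (K_spec al w ltac:(lra) hw) hM2)
      as [u1 [u2 [hu1 [hu2 [hu12 Hu]]]]].
    red in hu1, hu2.
    assert (T := transfer s c g beta p u1 u2 hs Hc Hg hc0 Hbeta hp ltac:(lra) hu12 ltac:(lra)).
    fold al in T. fold w in T. fold A in T.
    set (t1 := sqrt (u1 / c)) in *. set (t2 := sqrt (u2 / c)) in *.
    assert (ht1 : 0 < t1) by (apply sqrt_lt_R0, Rdiv_lt_0_compat; lra).
    assert (ht12 : t1 <= t2) by (apply sqrt_le_1_alt; unfold Rdiv; apply Rmult_le_compat_r; [left; apply Rinv_0_lt_compat|]; lra).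
    assert (E2 : c * t2 ^ 2 = u2) by (unfold t2; rewrite pow2_sqrt by (left; apply Rdiv_lt_0_compat; lra); field; lra).
    exists (RInt (fun x => rpow (Rabs (g x)) p / Rpower x beta) t1 t2). split.
    + apply (Fp_compact s c g beta p t1 t2 hs Hc Hg hc0 ht1 ht12). lra.
    + apply (Rmult_lt_reg_l A); auto. lra.
  - intros M hM. destruct (Rlt_le_dec M 0) as [hM0|hM0].
    + exists 0. intros p hp. exists 0. split.
      * exists 1, 1, (RiemannInt_P7 _ 1). split; [lra|]. rewrite RiemannInt_P9. reflexivity.
      * unfold Rdiv. assert (0 < / Rpower p al) by (apply Rinv_0_lt_compat, Rpower_pos). nra.
    + assert (hAM : A * M < Gamma al).
      { apply (Rmult_lt_compat_l A) in hM; auto. unfold Rdiv in hM. fold A in hM.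
        replace (A * (Gamma al * / A)) with (Gamma al) in hM by (field; lra). exact hM. }
      destruct (gd_approx Dpos _ _ (gam al) (Gamma al) (A * M) gd_pos (Gamma_spec al ltac:(lra)) hAM)
        as [a [b [ha [hb [hab HG]]]]].
      red in ha, hb.
      set (G := RInt (gam al) a b) in *.
      assert (hG : 0 < G) by nra.
      set (rho := A * M / G).
      assert (hrho : 0 <= rho < 1).
      { unfold rho. split. unfold Rdiv. apply Rmult_le_pos; [nra|left; apply Rinv_0_lt_compat; auto].
        apply (Rmult_lt_reg_r G); auto. unfold Rdiv. rewrite Rmult_assoc, Rinv_l by lra. lra. }
      exists (Rmax (2 * b) ((1 + 2 * b ^ 2) / (1 - rho))). intros p hp.
      assert (hp1 := Rmax_l (2 * b) ((1 + 2 * b ^ 2) / (1 - rho))).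
      assert (hp2 := Rmax_r (2 * b) ((1 + 2 * b ^ 2) / (1 - rho))).
      assert (hq : (1 + 2 * b ^ 2) / (1 - rho) >= 1 + 2 * b ^ 2).
      { apply Rle_ge. apply (Rmult_le_reg_r (1 - rho)); [lra|]. unfold Rdiv; rewrite Rmult_assoc, Rinv_l by lra.
        assert (0 <= rho * (1 + 2 * b ^ 2)) by (apply Rmult_le_pos; [lra|nra]). nra. }
      assert (hp0 : 0 < p) by lra.
      set (m := p + 1).
      assert (hm : 1 <= m) by (unfold m; lra).
      assert (hbm : 2 * b <= m) by (unfold m; lra).
      assert (KL := K_lower al m a b ltac:(lra) ha hab hm hbm). fold G in KL.
      assert (Dam : 0 < a / m) by (apply Rdiv_lt_0_compat; lra).
      assert (Dab : a / m <= b / m) by (unfold Rdiv; apply Rmult_le_compat_r; [left; apply Rinv_0_lt_compat|]; lra).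
      assert (Dbm : b / m < 1).
      { apply (Rmult_lt_reg_r m); [lra|]. unfold Rdiv; rewrite Rmult_assoc, Rinv_l by lra. lra. }
      assert (T := transfer s c g beta p (a / m) (b / m) hs Hc Hg hc0 Hbeta hp0 Dam Dab Dbm).
      fold al in T. fold m in T. fold A in T.
      set (t1 := sqrt (a / m / c)) in *. set (t2 := sqrt (b / m / c)) in *.
      assert (ht1 : 0 < t1) by (apply sqrt_lt_R0, Rdiv_lt_0_compat; lra).
      assert (ht12 : t1 <= t2) by (apply sqrt_le_1_alt; unfold Rdiv at 1 3; apply Rmult_le_compat_r; [left; apply Rinv_0_lt_compat|]; lra).
      assert (E2 : c * t2 ^ 2 = b / m) by (unfold t2; rewrite pow2_sqrt by (left; apply Rdiv_lt_0_compat; lra); field; lra).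
      set (I := RInt (fun x => rpow (Rabs (g x)) p / Rpower x beta) t1 t2) in *.
      exists I. split.
      * apply (Fp_compact s c g beta p t1 t2 hs Hc Hg hc0 ht1 ht12). lra.
      * assert (hpm : 0 < Rpower m al) by apply Rpower_pos.
        assert (X1 : (1 - 2 * b ^ 2 / m) * G <= Rpower m al * (A * I)).
        { apply Rle_trans with (Rpower m al * RInt (fK al m) (a / m) (b / m)); auto.
          apply Rmult_le_compat_l; lra. }
        assert (hb2 : 2 * b ^ 2 / m <= 1).
        { apply (Rmult_le_reg_r m); [lra|]. unfold Rdiv; rewrite Rmult_assoc, Rinv_l by lra. unfold m; lra. }
        assert (X2 : (1 - 2 * b ^ 2 / m) * G / A <= Rpower m al * I).
        { apply (Rmult_le_reg_r A); auto. unfold Rdiv. rewrite Rmult_assoc, Rinv_l by lra. lra. }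
        assert (X3 : Rpower p al = Rpower (p / m) al * Rpower m al).
        { rewrite Rpower_mult_distr by (try apply Rdiv_lt_0_compat; lra). f_equal. field. lra. }
        assert (hpm1 : 0 < p / m <= 1).
        { split. apply Rdiv_lt_0_compat; lra.
          apply (Rmult_le_reg_r m); [lra|]. unfold Rdiv; rewrite Rmult_assoc, Rinv_l by lra. unfold m; lra. }
        assert (X4 := Rpower_ge_base (p / m) al hpm1 ltac:(lra)).
        assert (X5 : 0 <= (1 - 2 * b ^ 2 / m) * G / A).
        { unfold Rdiv. apply Rmult_le_pos; [|left; apply Rinv_0_lt_compat; auto]. apply Rmult_le_pos; lra. }
        assert (X6 : p / m * ((1 - 2 * b ^ 2 / m) * G / A) <= Rpower p al * I).
        { rewrite X3, Rmult_assoc. apply Rmult_le_compat; lra. }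
        assert (X7 : rho < p / m * (1 - 2 * b ^ 2 / m)).
        { assert (Y1 : 1 - (1 + 2 * b ^ 2) / m <= p / m * (1 - 2 * b ^ 2 / m)).
          { replace (p / m) with (1 - 1 / m) by (unfold m; field; lra).
            assert (0 <= 1 / m * (2 * b ^ 2 / m)) by (unfold Rdiv; repeat apply Rmult_le_pos; try nra; left; apply Rinv_0_lt_compat; lra).
            replace ((1 + 2 * b ^ 2) / m) with (1 / m + 2 * b ^ 2 / m) by (field; lra). nra. }
          assert (Y2 : (1 + 2 * b ^ 2) / m < 1 - rho).
          { apply div_swap_lt; unfold m; lra. }
          lra. }
        assert (X8 : M = rho * G / A) by (unfold rho; field; lra).
        assert (X9 : M < Rpower p al * I).
        { rewrite X8. apply Rlt_le_trans with (p / m * ((1 - 2 * b ^ 2 / m) * G / A)); auto.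
          replace (p / m * ((1 - 2 * b ^ 2 / m) * G / A)) with ((p / m * (1 - 2 * b ^ 2 / m)) * (G / A)) by (field; lra).
          unfold Rdiv at 1. rewrite Rmult_assoc. apply Rmult_lt_compat_r; auto.
          apply Rdiv_lt_0_compat; auto. }
        assert (hpa : 0 < Rpower p al) by apply Rpower_pos.
        apply (Rmult_lt_reg_l (Rpower p al)); auto. unfold Rdiv.
        rewrite (Rmult_comm M), <- Rmult_assoc, Rinv_r, Rmult_1_l by lra. exact X9.
Qed.
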